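(* Let $n, d, d_k$ be positive integers. For a real $n\times n$ matrix $M$, let $\mathrm{softmax}(M)$ denote the row-wise softmax, $(\mathrm{softmax}(M))_{ij} = \exp(M_{ij}) / \sum_{k=1}^n \exp(M_{ik})$, and for a matrix $A$ with strictly positive entries let $\log(A)$ denote the entrywise natural logarithm. A row-stochastic matrix is a real square matrix with nonnegative entries whose rows each sum to $1$. (1) Let $N$ be a positive integer and let $X_1, \dots, X_N \in \mathbb{R}^{n\times d}$ be pairwise distinct matrices. Let $A_1, \dots, A_N \in \mathbb{R}^{n\times n}$ be row-stochastic matrices with strictly positive entries such that $\mathrm{rank}(\log(A_m)) \le d_k$ for every $m = 1, \dots, N$. Then there exist maps $Q, K : \mathbb{R}^{n\times d} \to \mathbb{R}^{n\times d_k}$ such that $$\mathrm{softmax}\!\left(\frac{Q(X_m)K(X_m)^\top}{\sqrt{d_k}}\right) = A_m \quad \text{for all } m = 1, \dots, N.$$ (2) Suppose $d < n-1$ and let $X \in \mathbb{R}^{n\times d}$. Then there exists a row-stochastic matrix $A \in \mathbb{R}^{n\times n}$ with strictly positive entries and $\mathrm{rank}(\log(A)) = 1$ such that there are no matrices $W_q, W_k \in \mathbb{R}^{d\times d_k}$ satisfying $$\mathrm{softmax}\!\left(\frac{(XW_q)(XW_k)^\top}{\sqrt{d_k}}\right) = A.$$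
   Context: This formalizes the ''low-rank/linear bottleneck'' of standard dot-product attention: with linear query/key maps $Q(X) = XW_q$, $K(X) = XW_k$, the attention matrix is $\mathrm{softmax}(QK^\top/\sqrt{d_k})$ computed row-wise. *)

(* Defs.v *)
From mathcomp Require Import all_boot all_order all_algebra.
From mathcomp Require Import reals.
From mathcomp Require Import sequences exp.
Set Implicit Arguments. Unset Strict Implicit. Unset Printing Implicit Defensive.
Import Order.TTheory GRing.Theory Num.Theory.
Local Open Scope ring_scope.

Definition softmax (R : realType) (n : nat) (M : 'M[R]_n) : 'M[R]_n :=
  \matrix_(i, j) (expR (M i j) / \sum_(k < n) expR (M i k)).

Definition mx_log (R : realType) (m n : nat) (A : 'M[R]_(m, n)) : 'M[R]_(m, n) :=
  map_mx (@ln R) A.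

Definition row_stochastic (R : realType) (n : nat) (A : 'M[R]_n) : Prop :=
  (forall i j, 0 <= A i j) /\ (forall i, \sum_(j < n) A i j = 1).

Definition entrywise_pos (R : realType) (m n : nat) (A : 'M[R]_(m, n)) : Prop :=
  forall i j, 0 < A i j.

Definition attention (R : realType) (n dk : nat) (Q K : 'M[R]_(n, dk)) : 'M[R]_n :=
  softmax ((Num.sqrt (dk%:R : R))^-1 *: (Q *m K^T)).

(* Main.v *)
Require Import Defs.
From mathcomp Require Import all_boot all_order all_algebra.
From mathcomp Require Import reals.
From mathcomp Require Import sequences exp.
From mathcomp Require Import lra zify.
Import Order.TTheory GRing.Theory Num.Theory.
Local Open Scope ring_scope.

Lemma sumexp_gt0 (R : realType) (n : nat) (M : 'M[R]_n) i :
  0 < \sum_(k < n) expR (M i k).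
Proof.
rewrite (bigD1 i) //=.
have h1 := expR_gt0 (M i i).
have h2 : 0 <= \sum_(k < n | k != i) expR (M i k).
  by apply: sumr_ge0 => k _; apply/ltW/expR_gt0.
lra.
Qed.

Lemma softmax_gt0 (R : realType) (n : nat) (M : 'M[R]_n) i j :
  0 < softmax M i j.
Proof. by rewrite mxE divr_gt0 ?expR_gt0 ?sumexp_gt0. Qed.

Lemma softmax_sum (R : realType) (n : nat) (M : 'M[R]_n) i :
  \sum_(j < n) softmax M i j = 1.
Proof.
under eq_bigr do rewrite mxE.
by rewrite -mulr_suml mulfV // gt_eqF // sumexp_gt0.
Qed.

Lemma ln_softmax (R : realType) (n : nat) (M : 'M[R]_n) i j :
  ln (softmax M i j) = M i j - ln (\sum_(k < n) expR (M i k)).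
Proof.
rewrite mxE lnM ?posrE ?expR_gt0 ?invr_gt0 ?sumexp_gt0 //.
by rewrite lnV ?posrE ?sumexp_gt0 // expRK.
Qed.

Lemma softmax_log (R : realType) (n : nat) (A : 'M[R]_n) :
  row_stochastic A -> entrywise_pos A -> softmax (mx_log A) = A.
Proof.
move=> [_ hs] hp; apply/matrixP => i j.
rewrite mxE.
under eq_bigr do rewrite mxE lnK ?posrE ?hp //.
by rewrite hs divr1 mxE lnK ?posrE ?hp.
Qed.

Theorem theorem1 (R : realType) (n d dk : nat) :
  (0 < n)%N -> (0 < d)%N -> (0 < dk)%N ->
  (* (1) arbitrary maps Q, K can realize any finite family of low-rank-log targets *)
  (forall (N : nat) (X : 'I_N -> 'M[R]_(n, d)) (A : 'I_N -> 'M[R]_n),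
      (0 < N)%N ->
      injective X ->
      (forall m, row_stochastic (A m)) ->
      (forall m, entrywise_pos (A m)) ->
      (forall m, (\rank (mx_log (A m)) <= dk)%N) ->
      exists Q K : 'M[R]_(n, d) -> 'M[R]_(n, dk),
        forall m, attention (Q (X m)) (K (X m)) = A m)
  /\
  (* (2) linear query/key maps cannot realize some rank-1-log target *)
  ((d < n.-1)%N ->
   forall X : 'M[R]_(n, d),
     exists A : 'M[R]_n,
       [/\ row_stochastic A, entrywise_pos A, \rank (mx_log A) = 1%N &
        ~ exists Wq Wk : 'M[R]_(d, dk), attention (X *m Wq) (X *m Wk) = A]).
Proof.
move=> n0 d0 dk0; split.
  move=> N X A N0 Xinj Ast Apos Arank.
  pose c : R := Num.sqrt (dk%:R).
  have c0 : c != 0 by rewrite gt_eqF // sqrtr_gt0 ltr0n.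
  pose idx (Y : 'M[R]_(n, d)) : 'I_N :=
    if [pick m | X m == Y] is Some m then m else Ordinal N0.
  pose L m := mx_log (A m).
  pose U m : 'M[R]_(n,dk) := col_ebase (L m) *m pid_mx (\rank (L m)).
  pose V m : 'M[R]_(n,dk) := (pid_mx (\rank (L m)) *m row_ebase (L m))^T.
  exists (fun Y => c *: U (idx Y)), (fun Y => V (idx Y)) => m.
  have -> : idx (X m) = m.
    rewrite /idx; case: pickP => [m' /eqP/Xinj //|/(_ m)].
    by rewrite eqxx.
  rewrite /attention -scalemxAl scalerA mulVf // scale1r /U /V trmxK.
  rewrite mulmxA -(mulmxA (col_ebase _)) mul_pid_mx minnn.
  rewrite (minn_idPr (Arank m)) mulmx_ebase.
  exact: softmax_log.
move=> hd X.
pose B := row_mx X (const_mx 1 : 'M[R]_(n,1)).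
have /rowV0Pn [z /sub_kermxP zB z0] : kermx B != 0.
  rewrite kermx_eq0 /row_free.
  have := rank_leq_col B.
  move=> h; apply/negP => /eqP h'; rewrite h' in h; lia.
rewrite mul_mx_row in zB.
move: zB; rewrite -row_mx0 => /eq_row_mx [zX z1].
pose i0 : 'I_n := Ordinal n0.
pose M : 'M[R]_n := \matrix_(i, j) z 0 j.
exists (softmax M); split.
- split => [i j|i]; [exact/ltW/softmax_gt0 | exact: softmax_sum].
- exact: softmax_gt0.
- pose S := \sum_(k < n) expR (z 0 k).
  have ml : mx_log (softmax M) =
            (const_mx 1 : 'cV[R]_n) *m (\row_j (z 0 j - ln S)).
    apply/matrixP => i j.
    rewrite /mx_log mxE ln_softmax !mxE big_ord1 !mxE mul1r.
    by congr (_ - ln _); apply: eq_bigr => k _; rewrite mxE.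
  apply/eqP; rewrite eqn_leq; apply/andP; split.
    by rewrite ml (leq_trans (mxrankM_maxr _ _)) // rank_leq_row.
  rewrite lt0n mxrank_eq0; apply/eqP => h.
  have h1 : forall j, softmax M i0 j = 1.
    move=> j.
    have : (mx_log (softmax M)) i0 j = 0 by rewrite h mxE.
    rewrite mxE => e.
    by rewrite -(lnK (x:=softmax M i0 j)) ?posrE ?softmax_gt0 // e expR0.
  have := softmax_sum _ _ M i0.
  under eq_bigr do rewrite h1.
  rewrite sumr_const card_ord => /eqP; rewrite pnatr_eq1 => /eqP n1.
  rewrite n1 in hd; lia.
- case=> Wq [Wk h].
  pose P : 'M[R]_n := (Num.sqrt (dk%:R : R))^-1 *: (X *m Wq *m (X *m Wk)^T).
  have hP : softmax P = softmax M by exact: h.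
  have ez : forall j, z 0 j = P i0 j +
      (ln (\sum_(k < n) expR (M i0 k)) - ln (\sum_(k < n) expR (P i0 k))).
    move=> j.
    have := ln_softmax _ _ P i0 j; rewrite hP ln_softmax mxE => e.
    lra.
  set t := (_ - _) in ez.
  have Pz : P *m z^T = 0.
    rewrite /P -scalemxAl trmx_mul -!mulmxA -trmx_mul zX trmx0.
    by rewrite !mulmx0 scaler0.
  have sz : \sum_(j < n) z 0 j = 0.
    transitivity ((z *m (const_mx 1 : 'cV[R]_n)) 0 0); last by rewrite z1 mxE.
    by rewrite mxE; apply: eq_bigr => j _; rewrite mxE mulr1.
  have sPz : \sum_(j < n) P i0 j * z 0 j = 0.
    transitivity ((P *m z^T) i0 0); last by rewrite Pz mxE.
    by rewrite [RHS]mxE; apply: eq_bigr => k _; rewrite /P !mxE.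
  have s2 : \sum_(j < n) z 0 j * z 0 j = 0.
    transitivity (\sum_(j < n) (P i0 j * z 0 j + t * z 0 j)).
      by apply: eq_bigr => j _; rewrite {1}ez mulrDl.
    by rewrite big_split /= sPz -mulr_sumr sz mulr0 addr0.
  have zz : forall j, z 0 j * z 0 j = 0.
    move=> j; apply: (psumr_eq0P _ s2) => // k _.
    by rewrite -expr2 sqr_ge0.
  move/eqP: z0; apply; apply/matrixP => i j.
  rewrite ord1 mxE.
  have := zz j; by move/eqP; rewrite mulf_eq0 orbb => /eqP.
Qed.
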